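(* Let $v$ be a prime and let $\mathcal C$ be an a-proper $(v,w,w-1,\lambda_c)$-OOC. Then $\mathcal C$ contains a sequence whose set of positions of $1$s, $Q\subseteq\mathbb Z_v$, satisfies $\{rq+s:q\in Q\}=\{0,1,\dots,w-1\}$ for some $r\in\mathbb Z_v^*$ and $s\in\mathbb Z_v$; hence $\mathcal C$ is equivalent to an OOC containing a sequence with $w$ consecutive $1$s, where equivalence means: the sequences of one are obtained from those of the other by applying a common map $(x_t)\mapsto(x_{r't})$ with $r'\in\mathbb Z_v^*$ followed by a cyclic shift of each sequence individually.
   Context: $\mathbb Z_v^*=\{r\in\mathbb Z_v:\gcd(r,v)=1\}$. A $(v,w,\lambda_a,\lambda_c)$-OOC is a family $\mathcal C$ of binary sequences $X=(x_t)_{t=0}^{v-1}$ (indices mod $v$) of weight $w$ with $\sum_tx_tx_{t+\delta}\le\lambda_a$ for all $X\in\mathcal C$, $0<\delta<v$, and $\sum_tx_ty_{t+\delta}\le\lambda_c$ for all distinct $X,Y\in\mathcal C$, $0\le\delta<v$. It is a-proper if $\lambda_a$ equals some auto-correlation value $\sum_tx_tx_{t+\delta}$ ($X\in\mathcal C$, $0<\delta<v$). *)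

(* Defs.v *)
From HB Require Import structures.
From mathcomp Require Import all_boot all_order all_algebra.
Set Implicit Arguments. Unset Strict Implicit. Unset Printing Implicit Defensive.
Import GRing.Theory.

(* A binary sequence of length v, indices taken mod v (v >= 2 in use). *)
Definition binseq (v : nat) := {ffun 'Z_v -> bool}.

Definition weight v (X : binseq v) : nat := \sum_(t : 'Z_v) (X t : nat).

Definition autocorr v (X : binseq v) (d : 'Z_v) : nat :=
  \sum_(t : 'Z_v) ((X t : nat) * (X (t + d)%R : nat)).

Definition crosscorr v (X Y : binseq v) (d : 'Z_v) : nat :=
  \sum_(t : 'Z_v) ((X t : nat) * (Y (t + d)%R : nat)).

Definition is_OOC v (w la lc : nat) (C : {set binseq v}) : Prop :=
  [/\ (forall X, X \in C -> weight X = w),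
      (forall X, X \in C -> forall d : 'Z_v, d != 0%R -> autocorr X d <= la) &
      (forall X Y, X \in C -> Y \in C -> X != Y ->
         forall d : 'Z_v, crosscorr X Y d <= lc)].

Definition a_proper v (la : nat) (C : {set binseq v}) : Prop :=
  exists2 X, X \in C & exists2 d : 'Z_v, d != 0%R & autocorr X d = la.

Definition in_Zv_star v (r : 'Z_v) : bool := coprime (val r) v.

Definition ones_pos v (X : binseq v) : {set 'Z_v} := [set t | X t].

Definition mult_shift v (r s : 'Z_v) (X : binseq v) : binseq v :=
  [ffun t : 'Z_v => X (r * (t + s))%R].

Definition consecutive_ones v (w : nat) (X : binseq v) : Prop :=
  exists a : 'Z_v, forall t : 'Z_v, X t = (val (t - a)%R < w).

(* Main.v *)
Require Import Defs.
From mathcomp Require Import all_boot all_order all_algebra.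
From mathcomp Require Import zify ring.
Import GRing.Theory.

Section Aux.
Variable p : nat.
Local Notation Z := ('Z_p.+2).

Lemma prefix_card (m : nat) : m <= p.+2 -> #|[set t : Z | val t < m]| = m.
Proof.
move=> hm; rewrite cardsE -sum1_card.
rewrite -[in RHS](card_ord m) -sum1_card.
rewrite (big_ord_widen p.+2 (fun _ => 1) hm) //.
Qed.

Lemma prefix_card_le (m : nat) : #|[set t : Z | val t < m]| <= m.
Proof.
case: (leqP m p.+2) => hm; first by rewrite prefix_card.
apply: leq_trans (ltnW hm); apply: leq_trans (max_card _) _.
by rewrite card_ord.
Qed.

Lemma down_closed (K : {set Z}) :
  (forall k j : Z, k \in K -> val j <= val k -> j \in K) ->
  K = [set t : Z | val t < #|K|].
Proof.
move=> hK.
have sub : K \subset [set t : Z | val t < #|K|].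
  apply/subsetP => k kK; rewrite inE; rewrite ltnNge; apply/negP => hk.
  have : [set t : Z | val t < (val k).+1] \subset K.
    by apply/subsetP => j; rewrite inE => hj; apply: hK kK _.
  move/subset_leq_card; rewrite prefix_card ?ltn_ord //.
  move=> h; move: (leq_trans h hk); by rewrite ltnn.
apply/eqP; rewrite eqEcard sub /=; exact: prefix_card_le.
Qed.

Lemma unit_Z (d : Z) : prime p.+2 -> d != 0%R -> d \is a GRing.unit.
Proof.
move=> pr d0; rewrite -(natr_Zp d) unitZpE // prime_coprime //.
rewrite gtnNdvd // ?lt0n //.
Qed.


Lemma val_pred (k : Z) : k != 0%R -> val (k - 1)%R = (val k).-1.
Proof.
move=> k0.
have hk : 0 < val k by rewrite lt0n.
rewrite -{1}(natr_Zp k) -[X in (_ - X)%R]/(1%:R)%R -natrB //.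
rewrite /= (val_Zp_nat (p:=p.+2)) // modn_small; first by rewrite subn1.
have := ltn_ord k; rewrite /Zp_trunc /=; lia.
Qed.

Lemma down_step (K : {set Z}) :
  (forall k, k \in K -> k != 0%R -> (k - 1)%R \in K) ->
  forall k j : Z, k \in K -> val j <= val k -> j \in K.
Proof.
move=> hK k j kK hjk.
have [n hn] : exists n, val k = val j + n by exists (val k - val j); lia.
elim: n k kK hn {hjk} => [|n IH] k kK hk.
  by have -> : j = k by apply: val_inj; rewrite /= hk addn0.
have k0 : k != 0%R by apply/eqP => k0; move: hk; rewrite k0 /=; lia.
apply: (IH (k - 1)%R (hK k kK k0)).
rewrite val_pred // hk; lia.
Qed.

Lemma weight_card (X : binseq p.+2) : weight X = #|ones_pos X|.
Proof.
rewrite /weight /ones_pos -sum1_card [RHS]big_mkcond /=.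
apply: eq_bigr => t _; rewrite inE; by case: (X t).
Qed.

Lemma autocorr_card (X : binseq p.+2) (d : Z) :
  autocorr X d = #|[set t in ones_pos X | (t + d)%R \in ones_pos X]|.
Proof.
rewrite /autocorr /ones_pos -sum1_card [RHS]big_mkcond /=.
apply: eq_bigr => t _; rewrite !inE; by case: (X t); case: (X _).
Qed.

Lemma end_exists (Q : {set Z}) (d : Z) (w : nat) :
  #|Q| = w -> #|[set t in Q | (t + d)%R \in Q]| = w - 1 ->
  exists e : Z, forall q, q \in Q -> q != e -> (q + d)%R \in Q.
Proof.
move=> hQ hS.
case: (boolP [exists e, (e \in Q) && ((e + d)%R \notin Q)]).
  case/existsP => e /andP [eQ enQ]; exists e => q qQ qe.
  apply/negPn/negP => qn.
  have : [set t in Q | (t + d)%R \in Q] \subset Q :\ e :\ q.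
    apply/subsetP => t; rewrite !inE => /andP [tQ tdQ].
    rewrite tQ andbT; apply/andP; split; apply/eqP => te; subst t.
      by rewrite tdQ in qn.
    by rewrite tdQ in enQ.
  move/subset_leq_card; rewrite hS.
  move: hQ; rewrite (cardsD1 e Q) eQ (cardsD1 q (Q :\ e)) !inE qe qQ /=.
  move=> <-; lia.
move/existsPn => hn; exists 0%R => q qQ _.
by move: (hn q); rewrite qQ /= negbK.
Qed.

Lemma key (Q : {set Z}) (d : Z) (w : nat) :
  prime p.+2 -> d != 0%R -> #|Q| = w -> #|[set t in Q | (t + d)%R \in Q]| = w - 1 ->
  exists2 r : Z, r \is a GRing.unit &
    exists s : Z, [set (r * q + s)%R | q in Q] = [set t : Z | val t < w].
Proof.
move=> pr d0 hQ hS.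
have du := unit_Z d pr d0.
have [e he] := @end_exists Q d w hQ hS.
exists (- d^-1)%R; first by rewrite unitrN unitrV.
exists (e * d^-1)%R.
set f := fun q : Z => (- d^-1 * q + e * d^-1)%R.
have finj : injective f.
  by move=> x y; rewrite /f => /addIr; apply: mulrI; rewrite unitrN unitrV.
rewrite -[X in X = _]/[set f q | q in Q].
have cK : #|[set f q | q in Q]| = w by rewrite card_imset.
rewrite -{1}cK; apply: down_closed.
apply: down_step => k /imsetP [q qQ ->] k0.
have qe : q != e.
  apply/eqP => qe; subst q; move/eqP: k0; apply.
  by rewrite /f mulNr [(e / d)%R]mulrC addNr.
have -> : (f q - 1 = f (q + d))%R.
  rewrite /f mulrDr !mulNr mulVr //; ring.
by apply: imset_f; apply: he.
Qed.

End Aux.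

Section Aux2.
Variable p : nat.
Local Notation Z := ('Z_p.+2).

Lemma hinj (r s : Z) : r \is a GRing.unit -> injective (fun t : Z => r * (t + s))%R.
Proof. by move=> ru x y /(mulrI ru) /addIr. Qed.

Lemma weight_ms (r s : Z) X : r \is a GRing.unit ->
  weight (mult_shift r s X) = weight X.
Proof.
move=> ru; rewrite /weight [RHS](reindex_inj (@hinj r s ru)).
by apply: eq_bigr => t _; rewrite ffunE.
Qed.

Lemma autocorr_ms (r s : Z) X dl : r \is a GRing.unit ->
  autocorr (mult_shift r s X) dl = autocorr X (r * dl)%R.
Proof.
move=> ru; rewrite /autocorr [RHS](reindex_inj (@hinj r s ru)).
apply: eq_bigr => t _; rewrite !ffunE.
by have -> : (r * (t + dl + s) = r * (t + s) + r * dl)%R by ring.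
Qed.

Lemma crosscorr_ms (r s1 s2 : Z) X Y dl : r \is a GRing.unit ->
  crosscorr (mult_shift r s1 X) (mult_shift r s2 Y) dl
  = crosscorr X Y (r * (dl + s2 - s1))%R.
Proof.
move=> ru; rewrite /crosscorr [RHS](reindex_inj (@hinj r s1 ru)).
apply: eq_bigr => t _; rewrite !ffunE.
by have -> : (r * (t + dl + s2) = r * (t + s1) + r * (dl + s2 - s1))%R by ring.
Qed.

Lemma unit_star (r : Z) : r \is a GRing.unit -> in_Zv_star r.
Proof.
by move=> ru; rewrite /in_Zv_star coprime_sym; move: ru; rewrite -{1}(natr_Zp r) unitZpE.
Qed.

End Aux2.

Theorem corollary5p5 (v w lc : nat) (C : {set binseq v}) :
  prime v -> is_OOC w (w - 1) lc C -> a_proper (w - 1) C ->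
  (exists2 X, X \in C &
     exists2 r : 'Z_v, in_Zv_star r &
       exists s : 'Z_v,
         [set (r * q + s)%R | q in ones_pos X] = [set t : 'Z_v | val t < w])
  /\
  (exists2 r' : 'Z_v, in_Zv_star r' &
     exists sh : binseq v -> 'Z_v,
       let C' := [set mult_shift r' (sh X) X | X in C] in
       is_OOC w (w - 1) lc C' /\
       exists2 Y, Y \in C' & consecutive_ones w Y).
Proof.
move=> pr [Hw Ha Hc] [X XC [d d0 Hd]].
have [p ev] : exists p, v = p.+2.
  by exists v.-2; have := prime_gt1 pr; lia.
subst v.
have [r ru [s Himg]] := @key p (ones_pos X) d w pr d0
  (etrans (esym (@weight_card p X)) (Hw X XC))
  (etrans (esym (@autocorr_card p X d)) Hd).
split; first by exists X => //; exists r => //; [exact: unit_star | exists s].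
have riu : (r^-1)%R \is a GRing.unit by rewrite unitrV.
exists (r^-1)%R; first exact: unit_star.
exists (fun _ => (- s)%R) => C'.
split.
  split.
  - by move=> Y /imsetP [X' X'C ->]; rewrite weight_ms // Hw.
  - move=> Y /imsetP [X' X'C ->] dl dl0; rewrite autocorr_ms //.
    apply: Ha => //; apply/eqP => /(congr1 (fun x => r * x)%R).
    by rewrite mulr0 mulVKr //; apply/eqP.
  - move=> Y1 Y2 /imsetP [X1 X1C ->] /imsetP [X2 X2C ->] ne dl.
    rewrite crosscorr_ms //; apply: Hc => //.
    by apply: contra ne => /eqP ->.
exists (mult_shift (r^-1)%R (- s)%R X); first by apply: imset_f.
exists 0%R => t; rewrite ffunE subr0.
have -> : (val t < w) = (t \in [set t : 'Z_p.+2 | val t < w]) by rewrite inE.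
rewrite -Himg.
set u := (r^-1 * (t + - s))%R.
have ht : t = (r * u + s)%R by rewrite /u mulVKr // addrNK.
rewrite [in RHS]ht.
rewrite (@mem_imset _ _ (fun q => (r * q + s)%R) (ones_pos X) u); last by move=> x y /addIr /(mulrI ru).
by rewrite inE.
Qed.
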